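(* For every $(\mu,\sigma)\in\Theta$, $$\sup_{x\in\mathbb{R}}|F_{(\mu,\sigma)}(x)-F_{(0,1)}(x)|=\max\{U(\mu,\sigma),V(\mu,\sigma)\},$$ where $$U(\mu,\sigma)=1-\exp\Big\{-\max\Big\{\mu,-\frac{\mu}{\sigma}\Big\}\Big\},$$ $V(\mu,1)=0$, and for $\sigma\ne1$ $$V(\mu,\sigma)=|1-\sigma|\exp\Big\{\frac{\mu-\sigma\ln\sigma}{\sigma-1}\Big\}\,\mathbb{1}_{\{\mu/\ln(\sigma)<\min\{\sigma,1\}\}}.$$
   Context: For $\vartheta=(\mu,\sigma)\in\Theta=\mathbb{R}\times(0,\infty)$, $F_\vartheta(x)=1-\exp\{-(x-\mu)/\sigma\}$ for $x>\mu$ and $F_\vartheta(x)=0$ for $x\le\mu$ (two-parameter exponential cdf). *)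

(* Defs.v *)
From Stdlib Require Import Reals.
Open Scope R_scope.

Definition Fexp (mu sigma x : R) : R :=
  if Rle_dec x mu then 0 else 1 - exp (- ((x - mu) / sigma)).

Definition U (mu sigma : R) : R := 1 - exp (- Rmax mu (- (mu / sigma))).

Definition V (mu sigma : R) : R :=
  if Req_EM_T sigma 1 then 0
  else if Rlt_dec (mu / ln sigma) (Rmin sigma 1)
       then Rabs (1 - sigma) * exp ((mu - sigma * ln sigma) / (sigma - 1))
       else 0.

Definition KSset (mu sigma : R) : R -> Prop :=
  fun y => exists x : R, y = Rabs (Fexp mu sigma x - Fexp 0 1 x).

(* Main.v *)
Require Import Defs.
From Stdlib Require Import Reals Lra Lia Psatz.
From Coquelicot Require Import Coquelicot.
Open Scope R_scope.

Definition hh mu s x := exp (-x) - exp (-((x-mu)/s)).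
Definition hd mu s x := exp (-((x-mu)/s)) / s - exp (-x).

Lemma exp_le' x y : x <= y -> exp x <= exp y.
Proof. intros [H|H]; [left; apply exp_increasing; auto| subst; lra]. Qed.

Lemma hh_deriv mu s c : 0 < s -> derivable_pt_lim (hh mu s) c (hd mu s c).
Proof.
  intros Hs. apply is_derive_Reals. unfold hh, hd. auto_derive; [auto|]. unfold Rminus, Rdiv; ring.
Qed.

Lemma hh_mvt mu s x y : 0 < s -> x < y ->
  exists c, x < c < y /\ hh mu s y - hh mu s x = hd mu s c * (y - x).
Proof.
  intros Hs Hxy. destruct (MVT_cor2 (hh mu s) (hd mu s) x y Hxy) as [c [H1 H2]].
  - intros; apply hh_deriv; auto.
  - exists c; auto.
Qed.

Lemma hd_alt mu s c : 0 < s ->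
  hd mu s c = (exp (-((c-mu)/s)) - exp (ln s - c)) / s.
Proof.
  intros Hs. unfold hd. replace (ln s - c) with (ln s + - c) by ring. rewrite exp_plus, exp_ln by auto. field. lra.
Qed.

Lemma hd_nonneg mu s c : 0 < s -> c*(s-1) >= s*ln s - mu -> hd mu s c >= 0.
Proof.
  intros Hs H. rewrite hd_alt by auto.
  set (A := -((c-mu)/s)).
  assert (HA : s * A = -(c-mu)) by (unfold A; field; lra).
  assert (A >= ln s - c) by nra.
  assert (exp (ln s - c) <= exp A) by (apply exp_le'; lra).
  apply Rle_ge. apply Rmult_le_pos. lra. left; apply Rinv_0_lt_compat; auto.
Qed.

Lemma hd_nonpos mu s c : 0 < s -> c*(s-1) <= s*ln s - mu -> hd mu s c <= 0.
Proof.
  intros Hs H. rewrite hd_alt by auto.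
  set (A := -((c-mu)/s)).
  assert (HA : s * A = -(c-mu)) by (unfold A; field; lra).
  assert (A <= ln s - c) by nra.
  assert (exp A <= exp (ln s - c)) by (apply exp_le'; lra).
  unfold Rdiv. apply Rmult_le_0_r. lra. left; apply Rinv_0_lt_compat; auto.
Qed.

Lemma hh_nonneg mu s x : 0 < s -> x*(1-s) >= mu -> hh mu s x >= 0.
Proof.
  intros Hs H. unfold hh. set (A := -((x-mu)/s)).
  assert (HA : s * A = -(x-mu)) by (unfold A; field; lra).
  assert (A <= -x) by nra.
  assert (exp A <= exp (-x)) by (apply exp_le'; lra). lra.
Qed.

Lemma hh_nonpos mu s x : 0 < s -> x*(1-s) <= mu -> hh mu s x <= 0.
Proof.
  intros Hs H. unfold hh. set (A := -((x-mu)/s)).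
  assert (HA : s * A = -(x-mu)) by (unfold A; field; lra).
  assert (A >= -x) by nra.
  assert (exp (-x) <= exp A) by (apply exp_le'; lra). lra.
Qed.

Lemma hh_xs mu s : 0 < s -> s <> 1 ->
  hh mu s ((mu - s * ln s)/(1-s)) = (1-s) * exp ((mu - s*ln s)/(s-1)).
Proof.
  intros Hs Hs1. unfold hh.
  assert (N1 : 1-s<>0) by (intro; apply Hs1; lra).
  assert (N2 : s-1<>0) by (intro; apply Hs1; lra).
  assert (E1 : -((mu - s * ln s)/(1-s)) = (mu - s*ln s)/(s-1)).
  { field; auto. }
  assert (E2 : -(((mu - s * ln s)/(1-s) - mu)/s) = ln s + (mu - s*ln s)/(s-1)).
  { field; repeat split; auto; lra. }
  rewrite E1, E2, exp_plus, exp_ln by auto. ring.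
Qed.

Lemma U_nn mu s : 0 < s -> 0 <= mu -> U mu s = 1 - exp (- mu).
Proof.
  intros Hs Hm. unfold U. rewrite Rmax_left; auto.
  assert (0 <= mu / s) by (assert (s*(mu/s)=mu) by (field; lra); nra). lra.
Qed.

Lemma U_neg mu s : 0 < s -> mu < 0 -> U mu s = 1 - exp (mu / s).
Proof.
  intros Hs Hm. unfold U. rewrite Rmax_right.
  - f_equal. f_equal. ring.
  - assert (mu / s < 0) by (assert (s*(mu/s)=mu) by (field; lra); nra). lra.
Qed.

Lemma hh_p mu s : 0 < s -> Rabs (hh mu s (Rmax mu 0)) = U mu s.
Proof.
  intros Hs. destruct (Rle_or_lt 0 mu) as [Hm|Hm].
  - rewrite Rmax_left by lra. rewrite U_nn by auto. unfold hh.
    replace (-((mu-mu)/s)) with 0 by (field; lra). rewrite exp_0.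
    assert (exp (-mu) <= exp 0) by (apply exp_le'; lra). rewrite exp_0 in H.
    rewrite Rabs_left1 by lra. ring.
  - rewrite Rmax_right by lra. rewrite U_neg by auto. unfold hh.
    replace (-((0-mu)/s)) with (mu/s) by (field; lra). rewrite Ropp_0, exp_0.
    assert (mu / s < 0) by (assert (s*(mu/s)=mu) by (field; lra); nra).
    assert (exp (mu/s) <= exp 0) by (apply exp_le'; lra). rewrite exp_0 in H0.
    rewrite Rabs_right by lra. ring.
Qed.

Lemma U_ge0 mu s : 0 < s -> 0 <= U mu s.
Proof. intros Hs. rewrite <- hh_p by auto. apply Rabs_pos. Qed.

Lemma ln_lt0 s : 0 < s -> s < 1 -> ln s < 0.
Proof. intros. rewrite <- ln_1. apply ln_increasing; auto. Qed.
Lemma ln_gt0 s : 1 < s -> 0 < ln s.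
Proof. intros. rewrite <- ln_1. apply ln_increasing; lra. Qed.

Lemma mul_pos_l u k : 0 < k -> 0 < u * k -> 0 < u.
Proof. intros. destruct (Rle_or_lt u 0); auto. nra. Qed.
Lemma mul_neg_l u k : k < 0 -> 0 < u * k -> u < 0.
Proof. intros. destruct (Rle_or_lt 0 u); auto. nra. Qed.

Lemma cond_iff mu s xs : 0 < s -> s <> 1 -> xs * (1 - s) = mu - s * ln s ->
  (mu / ln s < Rmin s 1 <-> (mu < xs /\ 0 < xs)).
Proof.
  intros Hs Hs1 Fx.
  set (L := ln s) in *.
  set (q := mu / L).
  destruct (Rlt_or_le s 1) as [Hlt|Hge].
  - assert (HL : L < 0) by (apply ln_lt0; auto).
    assert (Hq : mu = q * L) by (unfold q; field; lra).
    rewrite Rmin_left by lra.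
    assert (E1 : xs * (1-s) = (q - s) * L) by (rewrite Fx, Hq; ring).
    assert (E2 : (xs - mu) * (1-s) = (q - 1) * (s * L)) by (replace ((xs-mu)*(1-s)) with (xs*(1-s) - mu*(1-s)) by ring; rewrite Fx, Hq; ring).
    assert (HsL : s * L < 0) by (clear - Hs HL; nra).
    split.
    + intros Hqs. split.
      * cut (0 < xs - mu); [lra|]. apply (mul_pos_l _ (1-s)); [lra|]. rewrite E2. assert (Hq1 : q < 1) by lra. clear - Hq1 HsL; nra.
      * apply (mul_pos_l _ (1-s)); [lra|]. rewrite E1. first [assert (Hq1 : q < s) by lra; clear - Hq1 HL; nra | assert (Hq1 : q < s) by lra; clear - Hq1 HL; nra].
    + intros [H1 H2].
      assert (0 < xs * (1-s)) by nra. rewrite E1 in H.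
      assert (q - s < 0) by (apply (mul_neg_l _ L); auto). lra.
  - assert (Hgt : 1 < s) by (destruct Hge; auto; congruence).
    assert (HL : 0 < L) by (apply ln_gt0; auto).
    assert (Hq : mu = q * L) by (unfold q; field; lra).
    rewrite Rmin_right by lra.
    assert (E1 : xs * (s-1) = (s - q) * L) by (replace (xs*(s-1)) with (-(xs*(1-s))) by ring; rewrite Fx, Hq; ring).
    assert (E2 : (xs - mu) * (s-1) = (1 - q) * (s * L)) by (replace ((xs-mu)*(s-1)) with (-(xs*(1-s)) + mu*(1-s)) by ring; rewrite Fx, Hq; ring).
    assert (HsL : 0 < s * L) by (clear - Hs HL; nra).
    split.
    + intros Hqs. split.
      * cut (0 < xs - mu); [lra|]. apply (mul_pos_l _ (s-1)); [lra|]. rewrite E2. assert (Hq1 : q < 1) by lra. clear - Hq1 HsL; nra.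
      * apply (mul_pos_l _ (s-1)); [lra|]. rewrite E1. first [assert (Hq1 : q < s) by lra; clear - Hq1 HL; nra | assert (Hq1 : q < s) by lra; clear - Hq1 HL; nra].
    + intros [H1 H2].
      assert (0 < (xs - mu) * (s-1)) by nra. rewrite E2 in H.
      assert (0 < 1 - q) by (apply (mul_pos_l _ (s*L)); auto). lra.
Qed.

Lemma Rabs_le_opp a : - Rabs a <= a.
Proof. unfold Rabs; destruct (Rcase_abs a); lra. Qed.

Definition xs mu s := (mu - s * ln s) / (1 - s).

Lemma Fx mu s : s <> 1 -> xs mu s * (1 - s) = mu - s * ln s.
Proof. intros. unfold xs. field. intro; apply H; lra. Qed.

Lemma V_cond mu s : 0 < s -> s <> 1 -> mu < xs mu s -> 0 < xs mu s ->
  V mu s = Rabs (hh mu s (xs mu s)).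
Proof.
  intros Hs Hs1 H1 H2. unfold V. destruct (Req_EM_T s 1); [congruence|].
  destruct (Rlt_dec (mu / ln s) (Rmin s 1)) as [C|C].
  - unfold xs. rewrite hh_xs by auto. rewrite Rabs_mult.
    rewrite (Rabs_right (exp _)) by (left; apply exp_pos). auto.
  - exfalso. apply C. apply (cond_iff mu s (xs mu s)); auto. apply Fx; auto.
Qed.

Lemma V_nocond mu s : 0 < s -> ~ (mu < xs mu s /\ 0 < xs mu s) -> V mu s = 0.
Proof.
  intros Hs HC. unfold V. destruct (Req_EM_T s 1); auto.
  destruct (Rlt_dec (mu / ln s) (Rmin s 1)) as [C|C]; auto.
  exfalso. apply HC. apply (cond_iff mu s (xs mu s)); auto. apply Fx; auto.
Qed.

Lemma V_one mu : V mu 1 = 0.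
Proof. unfold V. destruct (Req_EM_T 1 1); auto; congruence. Qed.

Lemma hh_bound mu s x : 0 < s -> mu < x -> 0 < x ->
  Rabs (hh mu s x) <= Rmax (U mu s) (V mu s).
Proof.
  intros Hs Hmx H0x.
  set (p := Rmax mu 0).
  assert (Hpx : p < x) by (unfold p; apply Rmax_lub_lt; auto).
  assert (Hp : Rabs (hh mu s p) = U mu s) by (apply hh_p; auto).
  assert (HUM : U mu s <= Rmax (U mu s) (V mu s)) by apply Rmax_l.
  assert (HVM : V mu s <= Rmax (U mu s) (V mu s)) by apply Rmax_r.
  assert (HU0 : 0 <= U mu s) by (apply U_ge0; auto).
  assert (Hhp : - U mu s <= hh mu s p <= U mu s) by (rewrite <- Hp; split; [apply Rabs_le_opp|apply RRle_abs]).
  destruct (Req_dec s 1) as [E|Hs1].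
  - subst s. rewrite V_one in *.
    assert (Eh : forall y, hh mu 1 y = exp (-y) * (1 - exp mu)).
    { intros y. unfold hh. replace (-((y-mu)/1)) with (-y + mu) by field. rewrite exp_plus. ring. }
    apply Rle_trans with (U mu 1); [|exact HUM].
    rewrite <- Hp, !Eh, !Rabs_mult, !(Rabs_right (exp _)) by (left; apply exp_pos).
    apply Rmult_le_compat_r; [apply Rabs_pos|]. apply exp_le'. lra.
  - set (L := ln s). set (z := xs mu s).
    assert (Fz : z * (1-s) = mu - s * L) by (apply Fx; auto).
    apply Rabs_le.
    destruct (Rlt_or_le s 1) as [Hlt|Hge].
    + assert (HL : L < 0) by (apply ln_lt0; auto).
      assert (Hmax : hh mu s x <= hh mu s z).
      { destruct (Rtotal_order x z) as [Hl|[He|Hg]].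
        - destruct (hh_mvt mu s x z Hs Hl) as [c [Hc Ec]].
          assert (hd mu s c >= 0) by (apply hd_nonneg; auto; fold L; nra). nra.
        - subst; lra.
        - destruct (hh_mvt mu s z x Hs Hg) as [c [Hc Ec]].
          assert (hd mu s c <= 0) by (apply hd_nonpos; auto; fold L; nra). nra. }
      split.
      * destruct (Rle_or_lt 0 (hh mu s x)) as [Hh|Hh]; [lra|].
        assert (Hx1 : x * (1-s) < mu).
        { destruct (Rlt_or_le (x*(1-s)) mu); auto. exfalso.
          assert (hh mu s x >= 0) by (apply hh_nonneg; lra). lra. }
        destruct (hh_mvt mu s p x Hs Hpx) as [c [Hc Ec]].
        assert (hd mu s c >= 0) by (apply hd_nonneg; auto; fold L; nra). nra.
      * destruct (Rlt_dec mu z) as [C1|C1]; [destruct (Rlt_dec 0 z) as [C2|C2]|].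
        -- apply Rle_trans with (V mu s); auto.
           rewrite (V_cond mu s) by auto. fold z. eapply Rle_trans; [apply Hmax|apply RRle_abs].
        -- assert (z <= p) by (unfold p; apply Rle_trans with 0; [apply Rnot_lt_le in C2; lra|apply Rmax_r]).
           destruct (hh_mvt mu s p x Hs Hpx) as [c [Hc Ec]].
           assert (hd mu s c <= 0) by (apply hd_nonpos; auto; fold L; nra). nra.
        -- assert (z <= p) by (unfold p; apply Rle_trans with mu; [apply Rnot_lt_le in C1; lra|apply Rmax_l]).
           destruct (hh_mvt mu s p x Hs Hpx) as [c [Hc Ec]].
           assert (hd mu s c <= 0) by (apply hd_nonpos; auto; fold L; nra). nra.
    + assert (Hgt : 1 < s) by (destruct Hge; auto; congruence).
      assert (HL : 0 < L) by (apply ln_gt0; auto).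
      assert (Hmin : hh mu s z <= hh mu s x).
      { destruct (Rtotal_order x z) as [Hl|[He|Hg]].
        - destruct (hh_mvt mu s x z Hs Hl) as [c [Hc Ec]].
          assert (hd mu s c <= 0) by (apply hd_nonpos; auto; fold L; nra). nra.
        - subst; lra.
        - destruct (hh_mvt mu s z x Hs Hg) as [c [Hc Ec]].
          assert (hd mu s c >= 0) by (apply hd_nonneg; auto; fold L; nra). nra. }
      split.
      * destruct (Rlt_dec mu z) as [C1|C1]; [destruct (Rlt_dec 0 z) as [C2|C2]|].
        -- cut (- V mu s <= hh mu s x); [lra|].
           rewrite (V_cond mu s) by auto. fold z. eapply Rle_trans; [|apply Hmin].
           apply Rabs_le_opp.
        -- assert (z <= p) by (unfold p; apply Rle_trans with 0; [apply Rnot_lt_le in C2; lra|apply Rmax_r]).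
           destruct (hh_mvt mu s p x Hs Hpx) as [c [Hc Ec]].
           assert (hd mu s c >= 0) by (apply hd_nonneg; auto; fold L; nra). nra.
        -- assert (z <= p) by (unfold p; apply Rle_trans with mu; [apply Rnot_lt_le in C1; lra|apply Rmax_l]).
           destruct (hh_mvt mu s p x Hs Hpx) as [c [Hc Ec]].
           assert (hd mu s c >= 0) by (apply hd_nonneg; auto; fold L; nra). nra.
      * destruct (Rle_or_lt (hh mu s x) 0) as [Hh|Hh]; [lra|].
        assert (Hx1 : mu < x * (1-s)).
        { destruct (Rlt_or_le mu (x*(1-s))); auto. exfalso.
          assert (hh mu s x <= 0) by (apply hh_nonpos; lra). lra. }
        destruct (hh_mvt mu s p x Hs Hpx) as [c [Hc Ec]].
        assert (hd mu s c <= 0) by (apply hd_nonpos; auto; fold L; nra). nra.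
Qed.

Lemma G_hh mu s x : 0 < s -> mu < x -> 0 < x -> Fexp mu s x - Fexp 0 1 x = hh mu s x.
Proof.
  intros Hs H1 H2. unfold Fexp, hh.
  destruct (Rle_dec x mu); [lra|]. destruct (Rle_dec x 0); [lra|].
  replace ((x-0)/1) with x by field. ring.
Qed.

Lemma G_bound mu s x : 0 < s ->
  Rabs (Fexp mu s x - Fexp 0 1 x) <= Rmax (U mu s) (V mu s).
Proof.
  intros Hs.
  assert (HUM : U mu s <= Rmax (U mu s) (V mu s)) by apply Rmax_l.
  assert (HU0 : 0 <= U mu s) by (apply U_ge0; auto).
  destruct (Rle_or_lt x mu) as [H1|H1]; destruct (Rle_or_lt x 0) as [H2|H2].
  - unfold Fexp. destruct (Rle_dec x mu); [|lra]. destruct (Rle_dec x 0); [|lra].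
    replace (0-0) with 0 by ring. rewrite Rabs_R0. lra.
  - unfold Fexp. destruct (Rle_dec x mu); [|lra]. destruct (Rle_dec x 0); [lra|].
    replace ((x-0)/1) with x by field.
    rewrite U_nn in HUM |- * by lra.
    assert (exp (-mu) <= exp (-x)) by (apply exp_le'; lra).
    assert (exp (-x) <= exp 0) by (apply exp_le'; lra). rewrite exp_0 in H0.
    rewrite Rabs_left1 by lra. lra.
  - unfold Fexp. destruct (Rle_dec x mu); [lra|]. destruct (Rle_dec x 0); [|lra].
    rewrite U_neg in HUM |- * by lra.
    assert (E : s * ((x - mu)/s) = x - mu) by (field; lra).
    assert (E2 : s * (mu/s) = mu) by (field; lra).
    assert (exp (mu/s) <= exp (-((x-mu)/s))) by (apply exp_le'; nra).
    assert (exp (-((x-mu)/s)) <= exp 0) by (apply exp_le'; nra). rewrite exp_0 in H0.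
    rewrite Rabs_right by lra. lra.
  - rewrite G_hh by auto. apply hh_bound; auto.
Qed.

Lemma U_attained mu s : 0 < s -> exists x, Rabs (Fexp mu s x - Fexp 0 1 x) = U mu s.
Proof.
  intros Hs. destruct (Rle_or_lt 0 mu) as [Hm|Hm].
  - exists mu. rewrite U_nn by auto. unfold Fexp.
    destruct (Rle_dec mu mu); [|lra]. destruct (Rle_dec mu 0).
    + assert (mu = 0) by lra. subst. replace (-0) with 0 by ring. rewrite exp_0.
      replace (0-0) with 0 by ring. replace (1-1) with 0 by ring. apply Rabs_R0.
    + replace ((mu-0)/1) with mu by field.
      assert (exp (-mu) <= exp 0) by (apply exp_le'; lra). rewrite exp_0 in H.
      rewrite Rabs_left1 by lra. ring.
  - exists 0. rewrite U_neg by auto. unfold Fexp.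
    destruct (Rle_dec 0 mu); [lra|]. destruct (Rle_dec 0 0); [|lra].
    replace (-((0-mu)/s)) with (mu/s) by (field; lra).
    assert (E2 : s * (mu/s) = mu) by (field; lra).
    assert (exp (mu/s) <= exp 0) by (apply exp_le'; nra). rewrite exp_0 in H.
    rewrite Rabs_right by lra. ring.
Qed.

Lemma M_attained mu s : 0 < s ->
  exists x, Rabs (Fexp mu s x - Fexp 0 1 x) = Rmax (U mu s) (V mu s).
Proof.
  intros Hs. assert (HU0 : 0 <= U mu s) by (apply U_ge0; auto).
  destruct (Rle_or_lt (V mu s) (U mu s)) as [HVU|HUV].
  - rewrite Rmax_left by auto. apply U_attained; auto.
  - rewrite Rmax_right by lra.
    destruct (Req_dec s 1) as [E|Hs1].
    + subst. rewrite V_one in HUV. lra.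
    + destruct (Rlt_dec mu (xs mu s)) as [C1|C1]; [destruct (Rlt_dec 0 (xs mu s)) as [C2|C2]|].
      * exists (xs mu s). rewrite G_hh by auto. symmetry. apply V_cond; auto.
      * rewrite V_nocond in HUV by (auto; tauto). lra.
      * rewrite V_nocond in HUV by (auto; tauto). lra.
Qed.

Theorem mainTheorem5 (mu sigma : R) (hsigma : 0 < sigma) :
  is_lub (KSset mu sigma) (Rmax (U mu sigma) (V mu sigma)).
Proof.
  split.
  - intros y [x ->]. apply G_bound; auto.
  - intros b Hb. destruct (M_attained mu sigma hsigma) as [x Hx].
    rewrite <- Hx. apply Hb. exists x. reflexivity.
Qed.
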